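(* Let the mesh have no non-periodic boundary facets, let $\mathcal G\subset\mathbb R^m$ be convex, and let the nodal coefficients satisfy $u_j\in\mathcal G$ for $j=1,\dots,N_h$. For every cell $K_e$, let $\lambda_{0i}^e>0$ ($i\in\mathcal N_e^\partial$) be such that the bar states $\bar u_{0i}^e$ lie in $\mathcal G$, and let $0<\Delta t_e\le\Delta t_e^{\max}$, where $\bar u^e$, $\bar u_{0i}^e$ and $\Delta t_e^{\max}$ are as defined in the context. Let the global time step satisfy $0<\Delta t\le\min_{1\le e\le E_h}\Delta t_e$. Then for every $i=1,\dots,N_h$ the forward Euler update $$m_iu_i^{\rm SSP}=\sum_{e\in\mathcal E_i}m_i^e\left[\Big(1-\frac{\Delta t}{\Delta t_e}\Big)u_i+\frac{\Delta t}{\Delta t_e}\bar u^e\right]$$ satisfies $u_i^{\rm SSP}\in\mathcal G$.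
   Context: Setting: $\Omega\subset\mathbb R^d$, a conforming mesh of cells $K_e$, $e=1,\dots,E_h$, and a conservation law $\partial_tu+\nabla\cdot\mathbf f(u)=0$ with $u\in\mathbb R^m$, $\mathbf f:\mathbb R^m\to\mathbb R^{m\times d}$. The continuous finite element space uses Bernstein basis functions $\varphi_j$, $j=1,\dots,N_h$ (continuous, nonnegative, partition of unity), with nodal points $\mathbf x_j$ and coefficients $u_j$. $\mathcal N_e$: indices of basis functions supported on $K_e$; $\mathcal E_i$: indices of cells $e$ with $i\in\mathcal N_e$. $m_i^e=\int_{K_e}\varphi_i\,\mathrm d\mathbf x$, $m_i=\sum_{e\in\mathcal E_i}m_i^e$. $\mathcal N_e^\partial=\{i\in\mathcal N_e:\mathbf x_i\in\partial K_e\}$, $\mathcal N_e^0=\mathcal N_e\setminus\mathcal N_e^\partial$ (for $i\in\mathcal N_e^0$, $\varphi_i=0$ on $\partial K_e$). $u^e=\frac1{|K_e|}\sum_{i\in\mathcal N_e}m_i^eu_i$. $\mathbf n$: unit outward normal of $K_e$; $\mathbf c_{i,e}=\int_{\partial K_e}\varphi_i\mathbf n\,\mathrm ds\ne0$ for $i\in\mathcal N_e^\partial$, $\mathbf n_{i,e}=\mathbf c_{i,e}/|\mathbf c_{i,e}|$. If $\mathcal N_e^0\ne\emptyset$: $s=1$, $m_0^e=\sum_{i\in\mathcal N_e^0}m_i^e$, $u_0^e=\frac1{m_0^e}\sum_{i\in\mathcal N_e^0}m_i^eu_i$; otherwise $s=2$, $m_0^e=|K_e|$, $u_0^e=u^e$.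 Bar states: $\bar u_{0i}^e=\frac{u_i+u_0^e}2-\frac{(\mathbf f(u_i)-\mathbf f(u_0^e))\mathbf n_{i,e}}{2\lambda_{0i}^e}$. Intermediate cell average: $\bar u^e=u^e-\frac{\Delta t_e}{|K_e|}\int_{\partial K_e}\mathbf f_h\mathbf n\,\mathrm ds$ with $\mathbf f_h=\sum_{j}\mathbf f(u_j)\varphi_j$. Bound: $\Delta t_e^{\max}=\frac1s\min\Big\{\min_{i\in\mathcal N_e^\partial}\frac{m_i^e}{|\mathbf c_{i,e}|\lambda_{0i}^e},\frac{m_0^e}{\sum_{i\in\mathcal N_e^\partial}|\mathbf c_{i,e}|\lambda_{0i}^e}\Big\}$. *)

(* Defs.v *)
From HB Require Import structures.
From mathcomp Require Import all_boot all_order all_algebra.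
From mathcomp Require Import boolp.
Set Implicit Arguments. Unset Strict Implicit. Unset Printing Implicit Defensive.
Import Order.TTheory GRing.Theory Num.Theory.
Local Open Scope ring_scope.

Definition convex_set (R : rcfType) (m : nat) (G : 'cV[R]_m -> Prop) :=
  forall x y, G x -> G y -> forall t : R, 0 <= t -> t <= 1 ->
    G (t *: x + (1 - t) *: y).

Definition vnorm (R : rcfType) (d : nat) (v : 'cV[R]_d) : R :=
  Num.sqrt (\sum_(k < d) v k 0 ^+ 2).

(* A conforming mesh with a continuous finite element space (Bernstein basis),
   together with the cell integrals.
   vint e g  = \int_{K_e} g dx ,
   bint e g  = \int_{\partial K_e} g n ds  (vector in R^d). *)
Record fe_mesh (R : rcfType) (d : nat) := FEMesh {
  n_cells : nat;
  n_nodes : nat;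
  cell : 'I_n_cells -> 'cV[R]_d -> Prop;
  bdry : 'I_n_cells -> 'cV[R]_d -> Prop;
  node : 'I_n_nodes -> 'cV[R]_d;
  phi  : 'I_n_nodes -> 'cV[R]_d -> R;
  vint : 'I_n_cells -> ('cV[R]_d -> R) -> R;
  bint : 'I_n_cells -> ('cV[R]_d -> R) -> 'cV[R]_d;
  vint_lin : forall e a g h,
    vint e (fun x => a * g x + h x) = a * vint e g + vint e h;
  bint_lin : forall e a g h,
    bint e (fun x => a * g x + h x) = a *: bint e g + bint e h;
  vint_local : forall e g h, (forall x, cell e x -> g x = h x) ->
    vint e g = vint e h;
  bint_local : forall e g h, (forall x, bdry e x -> g x = h x) ->
    bint e g = bint e h;
  vint_ge0 : forall e g, (forall x, cell e x -> 0 <= g x) -> 0 <= vint e g;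
  bdry_sub : forall e x, bdry e x -> cell e x;
  divergence : forall e, bint e (fun _ => 1) = 0;
  phi_ge0 : forall j x, 0 <= phi j x;
  phi_pu : forall e x, cell e x -> \sum_j phi j x = 1
}.

Arguments cell {R d} f e x.
Arguments bdry {R d} f e x.
Arguments node {R d} f i.
Arguments phi {R d} f j x.
Arguments vint {R d} f e g.
Arguments bint {R d} f e g.

Section Defs.
Variables (R : rcfType) (d m : nat) (M : fe_mesh R d).
Local Notation E := (n_cells M).
Local Notation N := (n_nodes M).

Definition Nset (e : 'I_E) : {set 'I_N} :=
  [set i | `[< exists x, cell M e x /\ phi M i x <> 0 >]].
Definition Eset (i : 'I_N) : {set 'I_E} := [set e | i \in Nset e].
Definition Nbd (e : 'I_E) : {set 'I_N} :=
  [set i in Nset e | `[< bdry M e (node M i) >]].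
Definition Nint (e : 'I_E) : {set 'I_N} := Nset e :\: Nbd e.

Definition mloc (e : 'I_E) (i : 'I_N) : R := vint M e (phi M i).
Definition mglob (i : 'I_N) : R := \sum_(e in Eset i) mloc e i.
Definition vol (e : 'I_E) : R := vint M e (fun _ => 1).
Definition cvec (e : 'I_E) (i : 'I_N) : 'cV[R]_d := bint M e (phi M i).
Definition nvec (e : 'I_E) (i : 'I_N) : 'cV[R]_d :=
  (vnorm (cvec e i))^-1 *: cvec e i.

Variables (f : 'cV[R]_m -> 'M[R]_(m, d)) (u : 'I_N -> 'cV[R]_m).

Definition cavg (e : 'I_E) : 'cV[R]_m :=
  (vol e)^-1 *: \sum_(i in Nset e) mloc e i *: u i.

Definition has_int (e : 'I_E) : bool := Nint e != set0.
Definition sfac (e : 'I_E) : R := if has_int e then 1 else 2.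
Definition m0 (e : 'I_E) : R :=
  if has_int e then \sum_(i in Nint e) mloc e i else vol e.
Definition u0 (e : 'I_E) : 'cV[R]_m :=
  if has_int e then (m0 e)^-1 *: \sum_(i in Nint e) mloc e i *: u i
  else cavg e.

Definition ubar0 (lam : 'I_E -> 'I_N -> R) (e : 'I_E) (i : 'I_N) : 'cV[R]_m :=
  (1 / 2) *: (u i + u0 e)
  - (2 * lam e i)^-1 *: ((f (u i) - f (u0 e)) *m nvec e i).

(* \int_{dK_e} f_h n ds  with  f_h = \sum_j f(u_j) phi_j *)
Definition fluxint (e : 'I_E) : 'cV[R]_m :=
  \col_k \sum_(l < d)
     (bint M e (fun x => \sum_j (f (u j)) k l * phi M j x)) l 0.

Definition ubar (e : 'I_E) (dte : R) : 'cV[R]_m :=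
  cavg e - (dte / vol e) *: fluxint e.

Definition dtmax (lam : 'I_E -> 'I_N -> R) (e : 'I_E) : R :=
  (sfac e)^-1 *
  \big[Num.min / m0 e / \sum_(i in Nbd e) vnorm (cvec e i) * lam e i]_(i in Nbd e)
     (mloc e i / (vnorm (cvec e i) * lam e i)).

Definition uSSP (dt : R) (dte : 'I_E -> R) (i : 'I_N) : 'cV[R]_m :=
  (mglob i)^-1 *: \sum_(e in Eset i)
     mloc e i *: ((1 - dt / dte e) *: u i + (dt / dte e) *: ubar e (dte e)).

End Defs.

Arguments Nset {R d} M e.
Arguments Eset {R d} M i.
Arguments Nbd {R d} M e.
Arguments Nint {R d} M e.
Arguments mloc {R d} M e i.
Arguments mglob {R d} M i.
Arguments vol {R d} M e.
Arguments cvec {R d} M e i.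
Arguments nvec {R d} M e i.
Arguments cavg {R d m} M u e.
Arguments has_int {R d} M e.
Arguments sfac {R d} M e.
Arguments m0 {R d} M e.
Arguments u0 {R d m} M u e.
Arguments ubar0 {R d m} M f u lam e i.
Arguments fluxint {R d m} M f u e.
Arguments ubar {R d m} M f u e dte.
Arguments dtmax {R d} M lam e.
Arguments uSSP {R d m} M f u dt dte i.

(* Main.v *)
Require Import Defs.
From HB Require Import structures.
From mathcomp Require Import all_boot all_order all_algebra.
From mathcomp Require Import boolp ring lra.
Import Order.TTheory GRing.Theory Num.Theory.
Local Open Scope ring_scope.

Section Conv.
Variables (R : rcfType) (m : nat) (G : 'cV[R]_m -> Prop).
Hypothesis HG : convex_set G.

Definition Cn (v : 'cV[R]_m) (W : R) :=
  0 <= W /\ (W = 0 -> v = 0) /\ (0 < W -> G (W^-1 *: v)).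

Lemma Cn0 : Cn 0 0.
Proof. by split=> //; split=> //; rewrite ltxx. Qed.

Lemma CnD v1 v2 W1 W2 : Cn v1 W1 -> Cn v2 W2 -> Cn (v1 + v2) (W1 + W2).
Proof.
move=> [h1 [z1 g1]] [h2 [z2 g2]].
split; first exact: addr_ge0.
split.
  move=> /eqP; rewrite paddr_eq0 // => /andP[/eqP a /eqP b].
  by rewrite z1 // z2 // addr0.
move=> hpos.
have [e1|p1] := eqVneq W1 0.
  by move: hpos; rewrite e1 add0r z1 // add0r; apply g2.
have [e2|p2] := eqVneq W2 0.
  by move: hpos; rewrite e2 addr0 z2 // addr0; apply g1.
have q1 : 0 < W1 by rewrite lt_def p1 h1.
have q2 : 0 < W2 by rewrite lt_def p2 h2.
have nz : W1 + W2 != 0 by rewrite gt_eqF.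
have t0 : 0 <= W1 / (W1 + W2) by rewrite divr_ge0 // ltW.
have t1 : W1 / (W1 + W2) <= 1 by rewrite ler_pdivrMr // mul1r lerDl ltW.
have := HG _ _ (g1 q1) (g2 q2) _ t0 t1.
have -> : W1 / (W1 + W2) *: (W1^-1 *: v1) + (1 - W1/(W1+W2)) *: (W2^-1 *: v2)
   = (W1+W2)^-1 *: (v1 + v2).
  rewrite !scalerA scalerDr; by congr (_ *: _ + _ *: _); field; rewrite ?nz ?p1 ?p2.
by [].
Qed.

Lemma CnZ a v W : 0 <= a -> Cn v W -> Cn (a *: v) (a * W).
Proof.
move=> ha [h [z g]].
have [->|pa] := eqVneq a 0.
  by rewrite scale0r mul0r; exact: Cn0.
have qa : 0 < a by rewrite lt_def pa ha.
split; first exact: mulr_ge0.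
split.
  by move=> /eqP; rewrite mulf_eq0 (negPf pa) /= => /eqP /z ->; rewrite scaler0.
move=> hp.
have qW : 0 < W by rewrite -(pmulr_rgt0 _ qa).
rewrite scalerA (_ : _ * a = W^-1); first exact: g.
by field; rewrite pa gt_eqF.
Qed.

Lemma CnG a x : G x -> 0 <= a -> Cn (a *: x) a.
Proof.
move=> gx ha; split=> //; split; first by move=> ->; rewrite scale0r.
by move=> hp; rewrite scalerA mulVf ?gt_eqF // scale1r.
Qed.

Lemma Cn_sum (I : finType) (P : pred I) (F : I -> 'cV[R]_m) (w : I -> R) :
  (forall i, P i -> Cn (F i) (w i)) ->
  Cn (\sum_(i | P i) F i) (\sum_(i | P i) w i).
Proof.
move=> H; apply: (big_rec2 Cn); first exact: Cn0.
by move=> i y1 y2 Pi; apply: CnD; apply: H.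
Qed.

Lemma Cn_eq v v' W W' : v = v' -> W = W' -> Cn v W -> Cn v' W'.
Proof. by move=> -> ->. Qed.

End Conv.
Arguments Cn {R m} G v W.
Arguments Cn0 {R m G}.
Arguments CnD {R m G} HG {v1 v2 W1 W2}.
Arguments CnZ {R m G a v W}.
Arguments CnG {R m G a x}.
Arguments Cn_sum {R m G} HG {I P F w}.
Arguments Cn_eq {R m G v v' W W'}.
Section Mesh.
Variables (R : rcfType) (d : nat) (M : fe_mesh R d).

Lemma vint0 e : vint M e (fun _ => 0) = 0.
Proof.
rewrite -[RHS](addNr (vint M e (fun _ => 1))) -mulN1r -vint_lin.
by apply: vint_local => x _; rewrite mulN1r addNr.
Qed.

Lemma vintD e g h : vint M e (fun x => g x + h x) = vint M e g + vint M e h.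
Proof.
rewrite -[vint M e g]mul1r -vint_lin; apply: vint_local => x _; by rewrite mul1r.
Qed.

Lemma vint_sum e (I : Type) (r : seq I) (P : pred I) (F : I -> 'cV[R]_d -> R) :
  vint M e (fun x => \sum_(i <- r | P i) F i x) = \sum_(i <- r | P i) vint M e (F i).
Proof.
elim: r => [|j r IH].
  by rewrite big_nil -[RHS](vint0 e); apply: vint_local => x _; rewrite big_nil.
rewrite big_cons; case: ifP => Pj.
  by rewrite -IH -vintD; apply: vint_local => x _; rewrite big_cons Pj.
by rewrite -IH; apply: vint_local => x _; rewrite big_cons Pj.
Qed.

Lemma bint0 e : bint M e (fun _ => 0) = 0.
Proof.
rewrite -[RHS](addNr (bint M e (fun _ => 1))) -scaleN1r -bint_lin.
by apply: bint_local => x _; rewrite mulN1r addNr.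
Qed.

Lemma bintD e g h : bint M e (fun x => g x + h x) = bint M e g + bint M e h.
Proof.
rewrite -[bint M e g]scale1r -bint_lin; apply: bint_local => x _; by rewrite mul1r.
Qed.

Lemma bintZ e a g : bint M e (fun x => a * g x) = a *: bint M e g.
Proof.
rewrite -[_ *: _]addr0 -(bint0 e) -bint_lin; apply: bint_local => x _; by rewrite addr0.
Qed.

Lemma bint_sum e (I : Type) (r : seq I) (P : pred I) (F : I -> 'cV[R]_d -> R) :
  bint M e (fun x => \sum_(i <- r | P i) F i x) = \sum_(i <- r | P i) bint M e (F i).
Proof.
elim: r => [|j r IH].
  by rewrite big_nil -[RHS](bint0 e); apply: bint_local => x _; rewrite big_nil.
rewrite big_cons; case: ifP => Pj.
  by rewrite -IH -bintD; apply: bint_local => x _; rewrite big_cons Pj.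
by rewrite -IH; apply: bint_local => x _; rewrite big_cons Pj.
Qed.

Lemma notNset e i : i \notin Nset M e -> forall x, cell M e x -> phi M i x = 0.
Proof.
rewrite inE => /asboolPn H x cx.
case: (eqVneq (phi M i x) 0) => // nz; exfalso; apply: H; exists x; split => //.
exact/eqP.
Qed.

Lemma mloc_out e i : i \notin Nset M e -> mloc M e i = 0.
Proof.
move=> H; rewrite /mloc -(vint0 e); apply: vint_local; exact: notNset.
Qed.

Lemma vol_sum e : vol M e = \sum_(i in Nset M e) mloc M e i.
Proof.
rewrite /vol (vint_local (h := fun x => \sum_j phi M j x)); last first.
  by move=> x cx; rewrite (phi_pu cx).
rewrite vint_sum [RHS]big_mkcond; apply: eq_bigr => j _.
by case: ifP => // /negbT /mloc_out.
Qed.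

Lemma cvec_out e i
  (Hint0 : forall i, i \in Nint M e -> forall x, bdry M e x -> phi M i x = 0) :
  i \notin Nbd M e -> cvec M e i = 0.
Proof.
move=> H; rewrite /cvec -(bint0 e); apply: bint_local => x bx.
case: (boolP (i \in Nset M e)) => Hi.
  by apply: Hint0 => //; rewrite /Nint inE H Hi.
exact: (@notNset _ _ Hi x (bdry_sub bx)).
Qed.

Lemma sum_cvec e
  (Hint0 : forall i, i \in Nint M e -> forall x, bdry M e x -> phi M i x = 0) :
  \sum_(i in Nbd M e) cvec M e i = 0.
Proof.
rewrite big_mkcond /= (_ : \sum_i _ = \sum_i cvec M e i); last first.
  by apply: eq_bigr => j _; case: ifP => // /negbT /(@cvec_out _ _ Hint0).
rewrite /cvec -bint_sum -(@divergence _ _ M e); apply: bint_local => x bx.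
by rewrite (phi_pu (bdry_sub bx)).
Qed.

Lemma fluxint_eq (m : nat) (f : 'cV[R]_m -> 'M[R]_(m, d)) u e :
  fluxint M f u e = \sum_i f (u i) *m cvec M e i.
Proof.
apply/matrixP => k j; rewrite ord1 !mxE summxE.
rewrite (eq_bigr (fun l => \sum_i f (u i) k l * cvec M e i l 0)); last first.
  move=> l _.
  rewrite (bint_sum e _ (index_enum _) xpredT (fun i x => f (u i) k l * phi M i x)).
  by rewrite summxE; apply: eq_bigr => i _; rewrite bintZ mxE.
rewrite exchange_big; apply: eq_bigr => i _; by rewrite mxE.
Qed.

End Mesh.
Lemma bigmin_le_idx (R : realDomainType) (I : finType) (A : pred I) (F : I -> R) x :
  \big[Num.min/x]_(i | A i) F i <= x.
Proof.
apply: (big_rec (fun y => y <= x)) => // i y _ hy.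
by rewrite ge_min hy orbT.
Qed.

Lemma bigmin_le_F (R : realDomainType) (I : finType) (A : pred I) (F : I -> R) x i :
  A i -> \big[Num.min/x]_(i | A i) F i <= F i.
Proof. by move=> Ai; rewrite (bigD1 i) //= ge_min lexx. Qed.

Lemma vnorm_gt0 (R : rcfType) (d : nat) (v : 'cV[R]_d) : v != 0 -> 0 < vnorm v.
Proof.
move=> nz; rewrite /vnorm sqrtr_gt0.
case/boolP: [exists k, v k 0 != 0] => [/existsP [k hk]|/existsPn H]; last first.
  case/negP: nz; apply/eqP/matrixP => k j; rewrite ord1 mxE.
  by apply/eqP; move: (H k); rewrite negbK.
rewrite (bigD1 k) //=.
have h1 : 0 < v k 0 ^+ 2 by rewrite exprn_even_gt0 // hk orbT.
have h2 : 0 <= \sum_(i < d | i != k) v i 0 ^+ 2 by apply: sumr_ge0 => i _; exact: sqr_ge0.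
lra.
Qed.

Section Main.
Variables (R : rcfType) (d m : nat) (M : fe_mesh R d).
Hypothesis Hint0 : forall e i, i \in Nint M e -> forall x, bdry M e x -> phi M i x = 0.
Hypothesis Hc0 : forall e i, i \in Nbd M e -> cvec M e i != 0.
Hypothesis Hmpos : forall e i, i \in Nset M e -> 0 < mloc M e i.
Variables (f : 'cV[R]_m -> 'M[R]_(m, d)) (G : 'cV[R]_m -> Prop).
Hypothesis HG : convex_set G.
Variable u : 'I_(n_nodes M) -> 'cV[R]_m.
Hypothesis Hu : forall j, G (u j).
Variable lam : 'I_(n_cells M) -> 'I_(n_nodes M) -> R.
Hypothesis Hlam : forall e i, i \in Nbd M e -> 0 < lam e i /\ G (ubar0 M f u lam e i).

Lemma Nbd_sub e : Nbd M e \subset Nset M e.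
Proof. by apply/subsetP => i; rewrite inE => /andP[]. Qed.

Lemma ubar_G e (dt : R) : Nset M e != set0 -> 0 < dt -> dt <= dtmax M lam e ->
  G (ubar M f u e dt).
Proof.
move=> /set0Pn [i0 Hi0] dtpos Hdtm.
set V := vol M e.
have Vpos : 0 < V.
  rewrite /V vol_sum (bigD1 i0) //=.
  have := Hmpos _ _ Hi0.
  have : 0 <= \sum_(i in Nset M e | i != i0) mloc M e i.
    by apply: sumr_ge0 => i /andP[hi _]; exact: ltW (Hmpos _ _ hi).
  lra.
set α := (sfac M e)^-1.
have αpos : 0 < α by rewrite /α /sfac; case: ifP => _; rewrite invr_gt0 ?ltr01 ?ltr0n.
set X := \sum_(i in Nbd M e) mloc M e i *: u i.
set U0 := u0 M u e.
set m0' := m0 M e.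
have [Gu0 [m0ge [KW KX]]] : G U0 /\ 0 <= m0' /\
   α * (\sum_(i in Nbd M e) mloc M e i + m0') = V /\
   α *: (X + m0' *: U0) = \sum_(i in Nset M e) mloc M e i *: u i.
  have [hint|hint] := boolP (has_int M e); move: (hint); rewrite /has_int => hint';
  rewrite /U0 /m0' /α /u0 /m0 /sfac /has_int ?hint' ?(negbTE hint').
  - move: (hint') => /set0Pn [j0 hj0].
    have NintS : forall i, i \in Nint M e -> i \in Nset M e.
      by move=> i; rewrite /Nint inE => /andP[].
    have C' : Cn G (\sum_(i in Nint M e) mloc M e i *: u i)
                   (\sum_(i in Nint M e) mloc M e i).
      apply: (Cn_sum HG) => i hi; apply: CnG => //; exact: ltW (Hmpos _ _ (NintS _ hi)).
    have mpos : 0 < \sum_(i in Nint M e) mloc M e i.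
      rewrite (bigD1 j0) //=.
      have := Hmpos _ _ (NintS _ hj0).
      have : 0 <= \sum_(i in Nint M e | i != j0) mloc M e i.
        by apply: sumr_ge0 => i /andP[hi _]; exact: ltW (Hmpos _ _ (NintS _ hi)).
      lra.
    case: C' => _ [_ C3].
    split; first exact: C3.
    split; first exact: ltW.
    have Hs : Nset M e :&: Nbd M e = Nbd M e by apply/setIidPr; exact: Nbd_sub.
    split.
      by rewrite invr1 mul1r /V vol_sum (big_setID (A := Nset M e) (Nbd M e)) Hs.
    rewrite invr1 scale1r scalerA mulfV ?gt_eqF // scale1r.
    by rewrite (big_setID (A := Nset M e) (Nbd M e)) Hs.
  - have eqN : Nbd M e = Nset M e.
      apply/eqP; rewrite eqEsubset Nbd_sub /= -setD_eq0.
      by move: hint'; rewrite negbK.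
    have C' : Cn G (\sum_(i in Nset M e) mloc M e i *: u i)
                   (\sum_(i in Nset M e) mloc M e i).
      apply: (Cn_sum HG) => i hi; apply: CnG => //; exact: ltW (Hmpos _ _ hi).
    rewrite -vol_sum -/V in C'.
    case: C' => _ [_ C3].
    split; first exact: C3.
    split; first exact: ltW.
    split.
      rewrite /X eqN -vol_sum -/V; lra.
    rewrite /cavg -/V scalerA mulfV ?gt_eqF // scale1r /X eqN.
    by apply/matrixP => k j; rewrite !mxE; lra.
set a := fun i => vnorm (cvec M e i) * lam e i.
set ub := fun i => ubar0 M f u lam e i.
have apos : forall i, i \in Nbd M e -> 0 < a i.
  move=> i hi; rewrite /a; apply: mulr_gt0; first exact: (@vnorm_gt0 _ _ _ (Hc0 _ _ hi)).
  by case: (Hlam _ _ hi).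
have Hflux : fluxint M f u e =
    \sum_(i in Nbd M e) (a i *: (u i + U0) - (2 * a i) *: ub i).
  rewrite fluxint_eq.
  have -> : \sum_i f (u i) *m cvec M e i = \sum_(i in Nbd M e) f (u i) *m cvec M e i.
    rewrite [RHS]big_mkcond; apply: eq_bigr => i _; case: ifP => // /negbT hi.
    by rewrite (@cvec_out _ _ M e i (Hint0 e) hi) mulmx0.
  have -> : \sum_(i in Nbd M e) f (u i) *m cvec M e i =
     \sum_(i in Nbd M e) ((f (u i) - f U0) *m cvec M e i) +
     \sum_(i in Nbd M e) (f U0 *m cvec M e i).
    by rewrite -big_split /=; apply: eq_bigr => i _; rewrite mulmxBl subrK.
  rewrite -mulmx_sumr (@sum_cvec _ _ M e (Hint0 e)) mulmx0 addr0.
  apply: eq_bigr => i hi.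
  have [lp _] := Hlam _ _ hi.
  have vn := (@vnorm_gt0 _ _ _ (Hc0 _ _ hi)).
  rewrite /ub /ubar0 -/U0.
  set Y := (f (u i) - f U0) *m nvec M e i.
  have -> : (f (u i) - f U0) *m cvec M e i = vnorm (cvec M e i) *: Y.
    by rewrite /Y scalemxAr /nvec scalerA mulfV ?gt_eqF // scale1r.
  apply/matrixP => k j; rewrite /a !mxE.
  by field; rewrite gt_eqF.
set S := \sum_(i in Nbd M e) a i.
have HVu : V *: ubar M f u e dt = α *: (X + m0' *: U0) - dt *: fluxint M f u e.
  rewrite KX /ubar /cavg -/V scalerBr !scalerA mulfV ?gt_eqF // scale1r.
  by rewrite (_ : V * (dt / V) = dt) //; field; rewrite gt_eqF.
set T := fun i => (α * mloc M e i) *: u i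
   - dt *: (a i *: (u i + U0) - (2 * a i) *: ub i) + (dt * a i) *: U0.
have HT : \sum_(i in Nbd M e) T i = α *: X - dt *: fluxint M f u e + (dt * S) *: U0.
  rewrite big_split sumrB /= Hflux; congr (_ - _ + _).
  - by rewrite /X scaler_sumr; apply: eq_bigr => i _; rewrite scalerA.
  - by rewrite scaler_sumr.
  - by rewrite /S mulr_sumr scaler_suml.
have HV' : V *: ubar M f u e dt = \sum_(i in Nbd M e) T i + (α * m0' - dt * S) *: U0.
  rewrite HVu HT; apply/matrixP => k j; rewrite !mxE; ring.
have Hmin : dt <= α * \big[Num.min/m0' / S]_(i in Nbd M e) (mloc M e i / a i).
  exact: Hdtm.
have bnd : forall i, i \in Nbd M e -> 0 <= α * mloc M e i - dt * a i.
  move=> i hi; have ap := apos _ hi.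
  have h1 := @bigmin_le_F _ _ (fun i => i \in Nbd M e) (fun i => mloc M e i / a i) (m0' / S) i hi.
  have h2 : dt <= α * (mloc M e i / a i).
    apply: (le_trans Hmin); apply: ler_wpM2l h1; exact: ltW.
  have h3 : dt * a i <= α * (mloc M e i / a i) * a i by apply: ler_wpM2r h2; exact: ltW.
  rewrite (_ : α * (mloc M e i / a i) * a i = α * mloc M e i) in h3; last first.
    by field; rewrite gt_eqF.
  lra.
have bnd0 : 0 <= α * m0' - dt * S.
  have [Sp|Sn] := ltP 0 S.
    have h1 := @bigmin_le_idx _ _ (fun i => i \in Nbd M e) (fun i => mloc M e i / a i) (m0' / S).
    have h2 : dt <= α * (m0' / S).
      apply: (le_trans Hmin); apply: ler_wpM2l h1; exact: ltW.
    have h3 : dt * S <= α * (m0' / S) * S by apply: ler_wpM2r h2; exact: ltW.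
    rewrite (_ : α * (m0' / S) * S = α * m0') in h3; last first.
      by field; rewrite gt_eqF.
    lra.
  have := mulr_ge0_le0 (ltW dtpos) Sn.
  have := mulr_ge0 (ltW αpos) m0ge.
  lra.
have CT : Cn G (\sum_(i in Nbd M e) T i) (\sum_(i in Nbd M e) (α * mloc M e i + dt * a i)).
  apply: (Cn_sum HG) => i hi.
  have [lp Gb] := Hlam _ _ hi.
  have ap := apos _ hi.
  apply: (Cn_eq (v := (α * mloc M e i - dt * a i) *: u i + (2 * dt * a i) *: ub i)
                (W := (α * mloc M e i - dt * a i) + 2 * dt * a i)).
  - by apply/matrixP => k j; rewrite /T !mxE; ring.
  - by ring.
  apply: (CnD HG); apply: CnG => //; first exact: bnd.
  by rewrite -mulrA mulr_ge0 // mulr_ge0 // ltW.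
have C0 := CnG Gu0 bnd0.
have := CnD HG CT C0; rewrite -HV'.
have -> : \sum_(i in Nbd M e) (α * mloc M e i + dt * a i) + (α * m0' - dt * S) = V.
  by rewrite big_split /= -mulr_sumr -mulr_sumr -/S -KW; ring.
case=> _ [_ C3]; have := C3 Vpos.
by rewrite scalerA mulVf ?gt_eqF // scale1r.
Qed.
End Main.

Theorem theorem1 (R : rcfType) (d m : nat) (M : fe_mesh R d)
  (* Bernstein-basis / mesh facts stated in the context *)
  (Hint0 : forall e i, i \in Nint M e -> forall x, bdry M e x -> phi M i x = 0)
  (Hc0 : forall e i, i \in Nbd M e -> cvec M e i != 0)
  (Hmpos : forall e i, i \in Nset M e -> 0 < mloc M e i)
  (Hcover : forall i, exists e, i \in Nset M e)
  (f : 'cV[R]_m -> 'M[R]_(m, d)) (G : 'cV[R]_m -> Prop) (HG : convex_set G)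
  (u : 'I_(n_nodes M) -> 'cV[R]_m) (Hu : forall j, G (u j))
  (lam : 'I_(n_cells M) -> 'I_(n_nodes M) -> R)
  (Hlam : forall e i, i \in Nbd M e -> 0 < lam e i /\ G (ubar0 M f u lam e i))
  (dte : 'I_(n_cells M) -> R)
  (Hdte : forall e, 0 < dte e /\ dte e <= dtmax M lam e)
  (dt : R) (Hdt : 0 < dt) (Hdtle : forall e, dt <= dte e) :
  forall i, G (uSSP M f u dt dte i).
Proof.
move=> i.
have inE' : forall e, (e \in Eset M i) = (i \in Nset M e) by move=> e; rewrite inE.
have C : Cn G (\sum_(e in Eset M i) mloc M e i *:
     ((1 - dt / dte e) *: u i + (dt / dte e) *: ubar M f u e (dte e)))
   (\sum_(e in Eset M i) mloc M e i).
  apply: (Cn_sum HG) => e he; rewrite inE' in he.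
  have [dp dm] := Hdte e.
  apply: CnG; last exact: ltW (Hmpos _ _ he).
  have Gb : G (ubar M f u e (dte e)).
    apply: (@ubar_G _ _ _ M Hint0 Hc0 Hmpos f G HG u Hu lam Hlam e (dte e)) => //.
    by apply/set0Pn; exists i.
  have t0 : 0 <= dt / dte e by rewrite divr_ge0 // ltW.
  have t1 : dt / dte e <= 1 by rewrite ler_pdivrMr // mul1r.
  have := HG _ _ Gb (Hu i) _ t0 t1.
  by rewrite addrC.
case: C => _ [_ C3].
apply: C3.
have [e he] := Hcover i.
rewrite (bigD1 e) ?inE' //=.
have := Hmpos _ _ he.
have : 0 <= \sum_(j in Eset M i | j != e) mloc M j i.
  by apply: sumr_ge0 => j /andP[hj _]; rewrite inE' in hj; exact: ltW (Hmpos _ _ hj).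
lra.
Qed.
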